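(* For any additive submonoid $N \subseteq \mathbb{N}$, both $\mathrm{Sym}(\Omega) \cup S(N)$ and $\mathrm{Sym}(\Omega) \cup S(N) \cup \mathrm{Inj}_{\infty}(\Omega)$ are submonoids of $\mathrm{Inj}(\Omega)$. Conversely, every submonoid $M \subseteq \mathrm{Inj}(\Omega)$ containing $\mathrm{Sym}(\Omega)$ equals either $\mathrm{Sym}(\Omega) \cup S(N)$ or $\mathrm{Sym}(\Omega) \cup S(N) \cup \mathrm{Inj}_{\infty}(\Omega)$, where $N = M_\mathbb{N}$ (a submonoid of $\mathbb{N}$).
   Context: $\Omega$ is a countably infinite set; $\mathrm{Inj}(\Omega)$ is the monoid of all injective maps $\Omega\to\Omega$ under composition (maps written on the right), $\mathrm{Sym}(\Omega)$ the group of permutations. $\mathbb{N}$ denotes the nonnegative integers. $\mathrm{Inj}_\infty(\Omega)=\{f\in\mathrm{Inj}(\Omega): |\Omega\setminus(\Omega)f|=\aleph_0\}$. For $M\subseteq\mathrm{Inj}(\Omega)$, $M_\mathbb{N}=\{|\Omega\setminus(\Omega)f|: f\in M\}\cap\mathbb{N}$. For $N\subseteq\mathbb{N}$, $S(N)=\{f\in\mathrm{Inj}(\Omega): |\Omega\setminus(\Omega)f|\in N\setminus\{0\}\}$. *)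

(* Defs.v *)
From Stdlib Require Import List Arith.
Import ListNotations.

(* Maps are functions Omega -> Omega,
   composed on the right: "f then g" is (fun x => g (f x)). *)

Definition countably_infinite (Omega : Type) : Prop :=
  exists e : Omega -> nat, (forall x y, e x = e y -> x = y) /\ (forall n, exists x, e x = n).

Definition inj {Omega : Type} (f : Omega -> Omega) : Prop :=
  forall x y, f x = f y -> x = y.

Definition Sym {Omega : Type} (f : Omega -> Omega) : Prop :=
  inj f /\ forall y, exists x, f x = y.

Definition notin_image {Omega : Type} (f : Omega -> Omega) (y : Omega) : Prop :=
  ~ exists x, f x = y.

Definition codefect {Omega : Type} (f : Omega -> Omega) (n : nat) : Prop :=
  exists l : list Omega, NoDup l /\ length l = n /\
    (forall y, In y l <-> notin_image f y).

(* |Omega \ (Omega)f| = aleph_0 : the complement of the image is infinite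
   (Omega being countable, infinite means countably infinite). *)
Definition codefect_infinite {Omega : Type} (f : Omega -> Omega) : Prop :=
  forall l : list Omega, exists y, notin_image f y /\ ~ In y l.

Definition Inj_inf {Omega : Type} (f : Omega -> Omega) : Prop :=
  inj f /\ codefect_infinite f.

Definition S_of {Omega : Type} (N : nat -> Prop) (f : Omega -> Omega) : Prop :=
  inj f /\ exists n, codefect f n /\ N n /\ n <> 0.

Definition M_nat {Omega : Type} (M : (Omega -> Omega) -> Prop) (n : nat) : Prop :=
  exists f, M f /\ codefect f n.

Definition nat_submonoid (N : nat -> Prop) : Prop :=
  N 0 /\ forall m n, N m -> N n -> N (m + n).

Definition inj_submonoid {Omega : Type} (M : (Omega -> Omega) -> Prop) : Prop :=
  (forall f, M f -> inj f) /\ M (fun x => x) /\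
  forall f g, M f -> M g -> M (fun x => g (f x)).

(* Main.v *)
Require Import Defs.
From Stdlib Require Import List Arith Lia Classical ClassicalEpsilon FunctionalExtensionality FinFun.
Import ListNotations.

Lemma mychoice {X Y : Type} (R : X -> Y -> Prop) :
  (forall x, exists y, R x y) -> exists f, forall x, R x (f x).
Proof.
  intros H. exists (fun x => proj1_sig (constructive_indefinite_description _ (H x))).
  intro x. exact (proj2_sig (constructive_indefinite_description _ (H x))).
Qed.

Definition bij_on {X Y : Type} (A : X -> Prop) (B : Y -> Prop) (h : X -> Y) : Prop :=
  (forall x, A x -> B (h x)) /\ (forall x y, A x -> A y -> h x = h y -> x = y) /\
  (forall z, B z -> exists x, A x /\ h x = z).

Lemma bij_on_trans {X Y Z : Type} {A : X -> Prop} {B : Y -> Prop} {C : Z -> Prop}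
  {h : X -> Y} {k : Y -> Z} :
  bij_on A B h -> bij_on B C k -> bij_on A C (fun x => k (h x)).
Proof.
  intros [h1 [h2 h3]] [k1 [k2 k3]]. split; [|split].
  - intros x Hx; apply k1, h1, Hx.
  - intros x y Hx Hy E. apply h2; auto.
  - intros z Hz. destruct (k3 z Hz) as [y [Hy E]]. destruct (h3 y Hy) as [x [Hx E']].
    exists x; split; auto. subst; auto.
Qed.

Lemma bij_on_sym {X Y : Type} (x0 : X) {A : X -> Prop} {B : Y -> Prop} {h : X -> Y} :
  bij_on A B h -> exists h', bij_on B A h'.
Proof.
  intros [h1 [h2 h3]].
  assert (H : forall z, exists y, B z -> A y /\ h y = z).
  { intro z. destruct (classic (B z)) as [Hz|Hz].
    - destruct (h3 z Hz) as [y Hy]; exists y; auto.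
    - exists x0; intro; contradiction. }
  destruct (mychoice _ H) as [h' Hh']. exists h'. split; [|split].
  - intros z Hz; apply (Hh' z Hz).
  - intros z1 z2 H1 H2 E. destruct (Hh' z1 H1) as [_ E1]. destruct (Hh' z2 H2) as [_ E2].
    rewrite <- E1, <- E2, E. reflexivity.
  - intros y Hy. exists (h y). split. apply h1, Hy.
    destruct (Hh' (h y) (h1 y Hy)) as [Ha Hb]. apply h2; auto.
Qed.

Lemma least_ex (P : nat -> Prop) : (exists n, P n) -> exists n, P n /\ forall k, P k -> n <= k.
Proof.
  intros [n Hn]. apply NNPP. intro Hno.
  assert (H : forall m k, k <= m -> ~ P k).
  { induction m.
    - intros k Hk HP. assert (k = 0) by lia. subst. apply Hno. exists 0; split; auto; lia.
    - intros k Hk HP. destruct (Nat.eq_dec k (S m)).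
      + subst. apply Hno. exists (S m). split; auto. intros j Hj.
        destruct (le_lt_dec (S m) j); auto. exfalso. apply (IHm j); [lia|auto].
      + apply (IHm k); [lia|auto]. }
  apply (H n n); auto.
Qed.

Fixpoint enum_of (next : nat -> nat) (k : nat) : nat :=
  match k with 0 => next 0 | S k => next (S (enum_of next k)) end.

Lemma enum_inf (P : nat -> Prop) : (forall m, exists n, m <= n /\ P n) ->
  exists en, bij_on (fun _ : nat => True) P en.
Proof.
  intro HP.
  assert (Hnx : forall m, exists n, (m <= n /\ P n) /\ forall k, m <= k /\ P k -> n <= k).
  { intro m. apply least_ex with (P := fun n => m <= n /\ P n). apply HP. }
  destruct (mychoice _ Hnx) as [next Hnext].
  set (en := enum_of next).
  assert (HPe : forall k, P (en k)) by (destruct k; simpl; apply Hnext).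
  assert (Hinc : forall k, en k < en (S k)).
  { intro k. unfold en; simpl. destruct (Hnext (S (enum_of next k))) as [[H1 _] _]. lia. }
  assert (Hmono : forall i j, i < j -> en i < en j).
  { intros i j Hij. induction Hij. apply Hinc. specialize (Hinc m); lia. }
  assert (Hge : forall k, k <= en k).
  { induction k; [lia| specialize (Hinc k); lia]. }
  exists en. split; [|split].
  - intros k _; apply HPe.
  - intros i j _ _ E. destruct (lt_eq_lt_dec i j) as [[H|H]|H]; auto; apply Hmono in H; lia.
  - intros n Hn.
    assert (Hc : forall k n, P n -> n <= en k -> exists j, True /\ en j = n).
    { induction k; intros n' Hn' Hle.
      + exists 0. split; auto. unfold en in *; simpl in *. destruct (Hnext 0) as [_ Hl].
        specialize (Hl n' (conj (Nat.le_0_l _) Hn')). lia.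
      + destruct (le_lt_dec n' (en k)) as [H|H]. apply IHk; auto.
        exists (S k). split; auto. unfold en in *; simpl in *.
        destruct (Hnext (S (enum_of next k))) as [_ Hl]. specialize (Hl n' (conj H Hn')). lia. }
    apply (Hc n n Hn (Hge n)).
Qed.

Lemma list_bij {O : Type} (x0 : O) (l : list O) (A : O -> Prop) :
  NoDup l -> (forall y, In y l <-> A y) ->
  bij_on (fun i => i < length l) A (fun i => nth i l x0).
Proof.
  intros ND HA. split; [|split].
  - intros i Hi. apply HA. apply nth_In; auto.
  - intros i j Hi Hj E. apply (proj1 (NoDup_nth l x0) ND i j Hi Hj E).
  - intros z Hz. apply HA in Hz. destruct (In_nth l z x0 Hz) as [i [Hi E]]. exists i; auto.
Qed.

Lemma transport {O : Type} (d : nat -> O) (e : O -> nat) (Hed : forall y, d (e y) = y)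
  (Hde : forall n, e (d n) = n) (A : O -> Prop) : bij_on (fun n => A (d n)) A d.
Proof.
  split; [auto|split].
  - intros n m _ _ E. rewrite <- (Hde n), <- (Hde m), E; auto.
  - intros z Hz. exists (e z). rewrite Hed. auto.
Qed.

Lemma equiv_inf {O : Type} (d : nat -> O) (e : O -> nat) (Hed : forall y, d (e y) = y)
  (Hde : forall n, e (d n) = n) (A B : O -> Prop) :
  (forall m, exists n, m <= n /\ A (d n)) -> (forall m, exists n, m <= n /\ B (d n)) ->
  exists k, bij_on A B k.
Proof.
  intros HA HB. destruct (enum_inf _ HA) as [ea Ha]. destruct (enum_inf _ HB) as [eb Hb].
  pose proof (bij_on_trans Ha (transport d e Hed Hde A)) as Ha'.
  pose proof (bij_on_trans Hb (transport d e Hed Hde B)) as Hb'.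
  destruct (bij_on_sym 0 Ha') as [h' Hh'].
  exists (fun y => d (eb (h' y))). exact (bij_on_trans Hh' Hb').
Qed.

Lemma equiv_fin {O : Type} (x0 : O) (A B : O -> Prop) (la lb : list O) :
  NoDup la -> NoDup lb -> length la = length lb ->
  (forall y, In y la <-> A y) -> (forall y, In y lb <-> B y) -> exists k, bij_on A B k.
Proof.
  intros Na Nb L Ha Hb.
  pose proof (list_bij x0 la A Na Ha) as Ba.
  pose proof (list_bij x0 lb B Nb Hb) as Bb. rewrite <- L in Bb.
  destruct (bij_on_sym 0 Ba) as [h' Hh'].
  eexists. exact (bij_on_trans Hh' Bb).
Qed.

Lemma combine {O : Type} (A B : O -> Prop) (h k : O -> O) :
  bij_on A B h -> bij_on (fun y => ~ A y) (fun y => ~ B y) k ->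
  exists q, Sym q /\ forall y, A y <-> B (q y).
Proof.
  intros [h1 [h2 h3]] [k1 [k2 k3]].
  set (q := fun y => if excluded_middle_informative (A y) then h y else k y).
  assert (Q1 : forall y, A y -> q y = h y).
  { intros y Hy. unfold q. destruct (excluded_middle_informative (A y)); tauto. }
  assert (Q2 : forall y, ~ A y -> q y = k y).
  { intros y Hy. unfold q. destruct (excluded_middle_informative (A y)); tauto. }
  exists q. split; [split|].
  - intros x y E. destruct (classic (A x)) as [Ax|Ax]; destruct (classic (A y)) as [Ay|Ay].
    + rewrite Q1, Q1 in E; auto.
    + rewrite Q1, Q2 in E; auto. exfalso. apply (k1 y Ay). rewrite <- E. apply h1; auto.
    + rewrite Q2, Q1 in E; auto. exfalso. apply (k1 x Ax). rewrite E. apply h1; auto.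
    + rewrite Q2, Q2 in E; auto.
  - intro z. destruct (classic (B z)) as [Bz|Bz].
    + destruct (h3 z Bz) as [x [Ax E]]. exists x. rewrite Q1; auto.
    + destruct (k3 z Bz) as [x [Ax E]]. exists x. rewrite Q2; auto.
  - intro y. split.
    + intro Ay. rewrite Q1; auto.
    + intro By. apply NNPP. intro Ay. rewrite Q2 in By; auto. apply (k1 y Ay); auto.
Qed.

Lemma img_inf {O : Type} (d : nat -> O) (e : O -> nat) (Hed : forall y, d (e y) = y)
  (Hde : forall n, e (d n) = n) (f : O -> O) :
  inj f -> forall m, exists n, m <= n /\ exists x, f x = d n.
Proof.
  intros Hf m. apply NNPP; intro Hno.
  set (l := map (fun i => e (f (d i))) (seq 0 (S m))).
  assert (ND : NoDup l).
  { apply Injective_map_NoDup. intros i j E.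
    apply (f_equal d) in E; rewrite !Hed in E; apply Hf in E;
    apply (f_equal e) in E; rewrite !Hde in E; auto.
    apply seq_NoDup. }
  assert (Hi : incl l (seq 0 m)).
  { intros a Ha. apply in_map_iff in Ha. destruct Ha as [i [Ei _]]. apply in_seq.
    destruct (lt_dec a m); [lia|]. exfalso. apply Hno. exists a. split; [lia|].
    exists (d i). rewrite <- Ei, Hed. reflexivity. }
  apply NoDup_incl_length in Hi; auto. unfold l in Hi. rewrite length_map, !length_seq in Hi. lia.
Qed.

Lemma coinf {O : Type} (d : nat -> O) (e : O -> nat) (Hed : forall y, d (e y) = y)
  (Hde : forall n, e (d n) = n) (f : O -> O) :
  codefect_infinite f -> forall m, exists n, m <= n /\ ~ exists x, f x = d n.
Proof.
  intros H m. destruct (H (map d (seq 0 m))) as [y [Hy Hn]]. exists (e y). split.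
  - destruct (le_lt_dec m (e y)); auto. exfalso; apply Hn. apply in_map_iff.
    exists (e y). split; [apply Hed| apply in_seq; lia].
  - rewrite Hed. exact Hy.
Qed.

Lemma fin_list {X : Type} (l : list X) : forall P : X -> Prop,
  (forall y, P y -> In y l) -> exists k, NoDup k /\ forall y, In y k <-> P y.
Proof.
  induction l as [|a l IHl]; intros P HP.
  - exists []. split. constructor. intro y; split; [intro H; inversion H | intro Hy; apply HP in Hy; inversion Hy].
  - destruct (IHl (fun y => P y /\ y <> a)) as [k [Hk Hk2]].
    { intros y [Py Ny]. destruct (HP y Py); [congruence|auto]. }
    destruct (classic (P a)).
    + exists (a :: k). split.
      * constructor; auto. intro Ha. apply Hk2 in Ha. tauto.
      * intro y. simpl. rewrite Hk2. split.
        -- intros [E|[Py _]]; subst; auto.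
        -- intro Py. destruct (classic (a = y)); auto.
    + exists k. split; auto. intro y. rewrite Hk2. split. tauto.
      intro Py. split; auto. intro E; subst; contradiction.
Qed.

Lemma dich {O : Type} (f : O -> O) : (exists n, codefect f n) \/ codefect_infinite f.
Proof.
  destruct (classic (codefect_infinite f)) as [H|H]; auto. left.
  unfold codefect_infinite in H. apply not_all_ex_not in H. destruct H as [l Hl].
  destruct (fin_list l (notin_image f)) as [k [Hk1 Hk2]].
  - intros y Hy. apply NNPP; intro Hn. apply Hl. exists y; auto.
  - exists (length k), k. auto.
Qed.

Lemma codef_comp {O : Type} (f g : O -> O) a b : inj g -> codefect f a -> codefect g b ->
  codefect (fun x => g (f x)) (b + a).
Proof.
  intros Hg [la [Na [La Ha]]] [lb [Nb [Lb Hb]]]. exists (lb ++ map g la). split; [|split].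
  - apply NoDup_app; auto.
    + apply Injective_map_NoDup; auto.
    + intros y Hy Hy'. apply in_map_iff in Hy'. destruct Hy' as [z [E _]].
      apply Hb in Hy. apply Hy. exists z; auto.
  - rewrite length_app, length_map; lia.
  - intro y. rewrite in_app_iff, in_map_iff. split.
    + intros [Hy|[z [E Hz]]].
      * intros [x Ex]. apply Hb in Hy. apply Hy. exists (f x); auto.
      * intros [x Ex]. apply Ha in Hz. apply Hz. exists x. apply Hg. congruence.
    + intro Hy. destruct (classic (exists z, g z = y)) as [[z Ez]|Hn].
      * right. exists z. split; auto. apply Ha. intros [x Ex]. apply Hy. exists x. congruence.
      * left. apply Hb. exact Hn.
Qed.

Lemma comp_inf1 {O : Type} (f g : O -> O) : inj g -> codefect_infinite f ->
  codefect_infinite (fun x => g (f x)).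
Proof.
  intros Hg Hf.
  assert (H : forall l k, exists y, notin_image f y /\ ~ In y k /\ ~ In (g y) l).
  { induction l as [|a l IHl]; intros k.
    - destruct (Hf k) as [y [H1 H2]]. exists y. repeat split; auto.
    - destruct (classic (exists z, g z = a)) as [[z Ez]|Hn].
      + destruct (IHl (z :: k)) as [y [H1 [H2 H3]]]. exists y. split; auto. split.
        * intro; apply H2; right; auto.
        * simpl. intros [E|E]; auto. apply H2. left. apply Hg. congruence.
      + destruct (IHl k) as [y [H1 [H2 H3]]]. exists y. repeat split; auto.
        simpl. intros [E|E]; auto. apply Hn. exists y; auto. }
  intros l. destruct (H l []) as [y [H1 [_ H3]]]. exists (g y). split; auto.
  intros [x Ex]. apply Hg in Ex. apply H1. exists x; auto.
Qed.

Lemma comp_inf2 {O : Type} (f g : O -> O) : codefect_infinite g ->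
  codefect_infinite (fun x => g (f x)).
Proof.
  intros Hg l. destruct (Hg l) as [y [H1 H2]]. exists y. split; auto.
  intros [x Ex]; apply H1; exists (f x); auto.
Qed.

Lemma sym_cod0 {O : Type} (f : O -> O) : Sym f <-> inj f /\ codefect f 0.
Proof.
  split.
  - intros [Hi Hs]. split; auto. exists []. split. constructor. split; auto. intro y. split.
    + intro H; inversion H.
    + intro Hn. exfalso. apply Hn. apply Hs.
  - intros [Hi [l [_ [L H]]]]. split; auto. intro y. apply NNPP. intro Hn.
    apply length_zero_iff_nil in L. subst. apply (proj2 (H y)) in Hn. inversion Hn.
Qed.

Lemma inj_comp {O : Type} (f g : O -> O) : inj f -> inj g -> inj (fun x => g (f x)).
Proof. intros Hf Hg x y E; apply Hf, Hg, E. Qed.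

Lemma set1_char {O : Type} (N : nat -> Prop) : nat_submonoid N -> forall f : O -> O,
  (Sym f \/ S_of N f) <-> (inj f /\ exists n, codefect f n /\ N n).
Proof.
  intros [HN0 HNa] f. split.
  - intros [Hs|[Hf [n [Hn [HNn _]]]]].
    + apply sym_cod0 in Hs. destruct Hs. split; auto. exists 0; auto.
    + split; auto; exists n; auto.
  - intros [Hf [n [Hn HNn]]]. destruct (Nat.eq_dec n 0).
    + subst. left; apply sym_cod0; auto.
    + right; split; auto; exists n; auto.
Qed.

Lemma set1_sub {O : Type} (N : nat -> Prop) : nat_submonoid N ->
  inj_submonoid (fun f : O -> O => Sym f \/ S_of N f).
Proof.
  intros HN. pose proof (set1_char (O:=O) N HN) as Hc. destruct HN as [HN0 HNa]. split; [|split].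
  - intros f Hf. apply Hc in Hf. tauto.
  - left. split. intros x y E; exact E. intro y; exists y; auto.
  - intros f g Hf Hg. apply Hc in Hf. apply Hc in Hg. apply Hc.
    destruct Hf as [Hf [a [Ha HNa']]]. destruct Hg as [Hg [b [Hb HNb]]].
    split. apply inj_comp; auto. exists (b + a). split. apply codef_comp; auto. apply HNa; auto.
Qed.

Lemma set2_sub {O : Type} (N : nat -> Prop) : nat_submonoid N ->
  inj_submonoid (fun f : O -> O => Sym f \/ S_of N f \/ Inj_inf f).
Proof.
  intros HN. pose proof (set1_sub (O:=O) N HN) as [Hi1 [Hid1 Hc1]]. split; [|split].
  - intros f [H|[H|[H _]]]; auto; apply Hi1; auto.
  - destruct Hid1; auto.
  - intros f g Hf Hg.
    assert (Hfi : inj f) by (destruct Hf as [H|[H|[H _]]]; auto; apply Hi1; auto).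
    assert (Hgi : inj g) by (destruct Hg as [H|[H|[H _]]]; auto; apply Hi1; auto).
    destruct (classic (Inj_inf f \/ Inj_inf g)) as [[[_ H]|[_ H]]|Hn].
    + right; right; split; [apply inj_comp; auto| apply comp_inf1; auto].
    + right; right; split; [apply inj_comp; auto| apply comp_inf2; auto].
    + assert (Hf1 : Sym f \/ S_of N f) by tauto.
      assert (Hg1 : Sym g \/ S_of N g) by tauto.
      destruct (Hc1 f g Hf1 Hg1); tauto.
Qed.

Lemma transfer_core {O : Type} (M : (O -> O) -> Prop) : inj_submonoid M ->
  (forall f, Sym f -> M f) -> forall f0 f, M f0 -> inj f ->
  (exists q, Sym q /\ forall y, (exists x, f0 x = y) <-> (exists x, f x = q y)) -> M f.
Proof.
  intros [Hi [Hid Hc]] HS f0 f H0 Hf [q [[Hqi Hqs] Hq]].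
  pose proof (Hi f0 H0) as Hf0.
  assert (Hr : forall x, exists y, q (f0 y) = f x).
  { intro x. destruct (Hqs (f x)) as [w Ew].
    assert (H : exists z, f0 z = w) by (apply Hq; exists x; auto).
    destruct H as [y Ey]. exists y. rewrite Ey. auto. }
  destruct (mychoice _ Hr) as [r Hr'].
  assert (Hsr : Sym r).
  { split.
    - intros a b E. apply Hf. rewrite <- Hr', <- (Hr' b), E. reflexivity.
    - intro y. destruct (proj1 (Hq (f0 y)) (ex_intro _ y eq_refl)) as [x Ex]. exists x.
      apply Hf0. apply Hqi. rewrite Hr'. auto. }
  assert (Heq : (fun x => q (f0 (r x))) = f) by (extensionality x; apply Hr').
  rewrite <- Heq. exact (Hc _ _ (Hc _ _ (HS r Hsr) H0) (HS q (conj Hqi Hqs))).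
Qed.

Lemma img_bij {O : Type} (d : nat -> O) (e : O -> nat) (Hed : forall y, d (e y) = y)
  (Hde : forall n, e (d n) = n) (f0 f : O -> O) : inj f0 -> inj f ->
  exists h, bij_on (fun y => exists x, f0 x = y) (fun y => exists x, f x = y) h.
Proof.
  intros H0 H. apply (equiv_inf d e Hed Hde).
  - apply (img_inf d e Hed Hde); auto.
  - apply (img_inf d e Hed Hde); auto.
Qed.

Lemma transfer_fin {O : Type} (d : nat -> O) (e : O -> nat) (Hed : forall y, d (e y) = y)
  (Hde : forall n, e (d n) = n) (M : (O -> O) -> Prop) : inj_submonoid M ->
  (forall f, Sym f -> M f) -> forall f0 f n, M f0 -> inj f -> codefect f0 n -> codefect f n -> M f.
Proof.
  intros HM HS f0 f n H0 Hf [la [Na [La Ha]]] [lb [Nb [Lb Hb]]].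
  pose proof (proj1 HM f0 H0) as Hf0.
  apply (transfer_core M HM HS f0 f H0 Hf).
  destruct (img_bij d e Hed Hde f0 f Hf0 Hf) as [h Hh].
  destruct (equiv_fin (d 0) (fun y => ~ exists x, f0 x = y) (fun y => ~ exists x, f x = y)
     la lb Na Nb ltac:(congruence) Ha Hb) as [k Hk].
  exact (combine _ _ h k Hh Hk).
Qed.

Lemma transfer_inf {O : Type} (d : nat -> O) (e : O -> nat) (Hed : forall y, d (e y) = y)
  (Hde : forall n, e (d n) = n) (M : (O -> O) -> Prop) : inj_submonoid M ->
  (forall f, Sym f -> M f) -> forall f0 f, M f0 -> inj f -> codefect_infinite f0 ->
  codefect_infinite f -> M f.
Proof.
  intros HM HS f0 f H0 Hf Ha Hb.
  pose proof (proj1 HM f0 H0) as Hf0.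
  apply (transfer_core M HM HS f0 f H0 Hf).
  destruct (img_bij d e Hed Hde f0 f Hf0 Hf) as [h Hh].
  destruct (equiv_inf d e Hed Hde (fun y => ~ exists x, f0 x = y) (fun y => ~ exists x, f x = y)
     (coinf d e Hed Hde f0 Ha) (coinf d e Hed Hde f Hb)) as [k Hk].
  exact (combine _ _ h k Hh Hk).
Qed.

Theorem mainTheorem5 (Omega : Type) (HOmega : countably_infinite Omega) :
  (forall N : nat -> Prop, nat_submonoid N ->
     inj_submonoid (fun f : Omega -> Omega => Sym f \/ S_of N f) /\
     inj_submonoid (fun f : Omega -> Omega => Sym f \/ S_of N f \/ Inj_inf f)) /\
  (forall M : (Omega -> Omega) -> Prop, inj_submonoid M ->
     (forall f, Sym f -> M f) ->
     nat_submonoid (M_nat M) /\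
     ((forall f, M f <-> (Sym f \/ S_of (M_nat M) f)) \/
      (forall f, M f <-> (Sym f \/ S_of (M_nat M) f \/ Inj_inf f)))).
Proof.
  destruct HOmega as [e [He1 He2]].
  destruct (mychoice _ He2) as [d Hde].
  assert (Hed : forall y, d (e y) = y) by (intro y; apply He1; rewrite Hde; auto).
  split.
  - intros N HN. split; [apply set1_sub | apply set2_sub]; auto.
  - intros M HM HS. pose proof HM as [Hi [Hid Hc]].
    assert (HMN : nat_submonoid (M_nat M)).
    { split.
      - exists (fun x => x). split; auto. apply sym_cod0. split.
        + intros x y E; auto.
        + intro y; exists y; auto.
      - intros m n [f [Hf Hm]] [g [Hg Hn]]. exists (fun x => g (f x)). split.
        + apply Hc; auto.
        + rewrite Nat.add_comm. apply codef_comp; auto. }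
    split; auto.
    destruct (classic (exists f0, M f0 /\ codefect_infinite f0)) as [[f0 [H0 H0i]]|Hno].
    + right. intro f. split.
      * intro Hf. destruct (dich f) as [[n Hn]|Hinf].
        -- destruct (Nat.eq_dec n 0).
           ++ subst; left; apply sym_cod0; auto.
           ++ right; left; split; auto; exists n; repeat split; auto; exists f; auto.
        -- right; right; split; auto.
      * intros [Hs|[[Hf [n [Hn [[f1 [H1 Hn1]] Hn0]]]]|[Hf Hfi]]].
        -- apply HS; auto.
        -- apply (transfer_fin d e Hed Hde M HM HS f1 f n); auto.
        -- apply (transfer_inf d e Hed Hde M HM HS f0 f); auto.
    + left. intro f. split.
      * intro Hf. destruct (dich f) as [[n Hn]|Hinf].
        -- destruct (Nat.eq_dec n 0).
           ++ subst; left; apply sym_cod0; auto.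
           ++ right; split; auto; exists n; repeat split; auto; exists f; auto.
        -- exfalso; apply Hno; exists f; auto.
      * intros [Hs|[Hf [n [Hn [[f1 [H1 Hn1]] Hn0]]]]].
        -- apply HS; auto.
        -- apply (transfer_fin d e Hed Hde M HM HS f1 f n); auto.
Qed.
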